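(* For every integer $Q \ge 2$, let $F_Q = \{a/q : 1 \le a \le q \le Q,\ \gcd(a,q) = 1\}$ be the $Q$-th Farey sequence, with elements listed in increasing order as $\gamma_1 < \gamma_2 < \cdots < \gamma_{N}$, where $N = |F_Q|$. Define $$S_2(Q) = \sum_{j=1}^{N-1} (\gamma_{j+1} - \gamma_j)^2 \quad\text{and}\quad C(Q) = \frac{S_2(Q)\, Q^2}{\log Q}.$$ Then $C(Q) < 3$ for all integers $Q > 1$.
   Context: $\log$ denotes the natural logarithm. *)

(* Defs.v *)
From HB Require Import structures.
From mathcomp Require Import all_boot all_order all_algebra.
From mathcomp Require Import all_classical all_reals all_analysis.
Set Implicit Arguments. Unset Strict Implicit. Unset Printing Implicit Defensive.
Import Order.TTheory GRing.Theory Num.Theory.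
Local Open Scope ring_scope.

Definition farey (Q : nat) : seq rat :=
  sort <=%R (undup
    [seq (a%:R / q%:R : rat) | q <- iota 1 Q, a <- [seq a <- iota 1 q | coprime a q]]).

Definition S2 (Q : nat) : rat :=
  let s := farey Q in
  \sum_(j < (size s).-1) (s`_j.+1 - s`_j) ^+ 2.

Definition C {R : realType} (Q : nat) : R :=
  ratr (S2 Q) * (Q%:R) ^+ 2 / ln (Q%:R : R).

(* Main.v *)
Require Import Defs.
From HB Require Import structures.
From mathcomp Require Import all_boot all_order all_algebra.
From mathcomp Require Import all_classical all_reals all_analysis.
From mathcomp Require Import ring lra zify.
Import Order.TTheory GRing.Theory Num.Theory.
Local Open Scope ring_scope.
Set Implicit Arguments. Unset Strict Implicit.
Lemma natabs (z : int) : 0 <= z -> (`|z|%N)%:R = z%:~R :> rat.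
Proof.
move=> z0.
have h : (`|z|%N)%:Z = z by rewrite abszE ger0_norm.
by rewrite -h.
Qed.

Definition nu (x : rat) : nat := `|numq x|%N.
Definition de (x : rat) : nat := `|denq x|%N.

Lemma de_gt0 x : (0 < de x)%N.
Proof. by rewrite /de absz_gt0 denq_eq0. Qed.

Lemma ratE (x : rat) : 0 < x -> x = (nu x)%:R / (de x)%:R.
Proof.
move=> x0; rewrite /nu /de !natabs ?numq_ge0 ?ltW ?denq_gt0 //.
by rewrite divq_num_den.
Qed.

Lemma nu_gt0 x : 0 < x -> (0 < nu x)%N.
Proof. by move=> x0; rewrite /nu absz_gt0 numq_eq0 gt_eqF. Qed.

Lemma coprime_nu_de x : coprime (nu x) (de x).
Proof. exact: coprime_num_den. Qed.

Lemma de_frac (a q : nat) : coprime a q -> (0 < q)%N -> de (a%:R / q%:R) = q.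
Proof.
move=> co q0.
have := @coprimeq_den (a%:Z) (q%:Z) co.
rewrite /de => ->; case: q q0 {co} => //.
Qed.

Lemma de_le (b r : nat) : (0 < r)%N -> (de (b%:R / r%:R) <= r)%N.
Proof.
move=> r0.
have E : (b%:R / r%:R : rat) = fracq (b%:Z, r%:Z) by rewrite fracqE.
rewrite /de E den_fracq /=.
case: r r0 E => // r _ _ /=; exact: leq_div.
Qed.

Lemma mem_farey Q x : (x \in farey Q) = (0 < x <= 1) && (de x <= Q)%N.
Proof.
rewrite /farey mem_sort mem_undup; apply/allpairsPdep/idP.
- move=> [q [a [qI aI ->]]].
  move: qI aI; rewrite mem_iota mem_filter mem_iota => qI /andP[co aI].
  have q0 : (0 < q)%N by lia.
  rewrite de_frac //; apply/andP; split; last by lia.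
  apply/andP; split.
  + by apply: divr_gt0; rewrite ltr0n; lia.
  + by rewrite ler_pdivrMr ?ltr0n // mul1r ler_nat; lia.
- move=> /andP[/andP[x0 x1] xQ].
  exists (de x), (nu x); split; last exact: ratE.
  + by rewrite mem_iota; have := de_gt0 x; lia.
  + rewrite mem_filter coprime_nu_de mem_iota /=.
    have := nu_gt0 x0; have := de_gt0 x.
    have : (nu x <= de x)%N.
      move: x1; rewrite {1}(ratE x0) ler_pdivrMr ?ltr0n ?de_gt0 // mul1r ler_nat //.
    lia.
Qed.

Lemma nu_lt_de x : 0 < x -> x < 1 -> (nu x < de x)%N.
Proof.
move=> x0; rewrite {1}(ratE x0) ltr_pdivrMr ?ltr0n ?de_gt0 // mul1r ltr_nat //.
Qed.

Lemma exists_r Q x : x \in farey Q -> x < 1 ->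
  exists r : 'I_Q.+1, (Q < de x + r)%N && (de x %| nu x * r + 1)%N.
Proof.
rewrite mem_farey => /andP[/andP[x0 _] xQ] x1.
have q0 := de_gt0 x.
have [u ult] := Bezoutl (nu x) q0.
rewrite gcdnC (eqP (coprime_nu_de x)) => du.
pose k := ((Q - u) %/ de x)%N.
have hk := divn_eq (Q - u) (de x).
have hm := ltn_pmod (Q - u) q0.
have rQ : (u + de x * k < Q.+1)%N by rewrite /k; lia.
exists (Ordinal rQ); apply/andP; split => /=.
  rewrite /k; lia.
have -> : (nu x * (u + de x * k) + 1 = (1 + u * nu x) + de x * (nu x * k))%N by ring.
by rewrite dvdn_add // dvdn_mulr.
Qed.

Lemma gap_le Q x y (r : nat) : x \in farey Q -> y \in farey Q -> x < y ->
  (forall z, z \in farey Q -> x < z -> y <= z) ->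
  (r <= Q)%N -> (Q < de x + r)%N -> (de x %| nu x * r + 1)%N ->
  y - x <= ((de x * r)%:R)^-1.
Proof.
move=> xF yF xy nb rQ Qr dv.
have := xF; rewrite mem_farey => /andP[/andP[x0 _] xQ].
have := yF; rewrite mem_farey => /andP[/andP[_ y1] _].
have x1 : x < 1 by apply: lt_le_trans y1.
have q0 := de_gt0 x.
have r0 : (0 < r)%N by lia.
have alt := nu_lt_de x0 x1.
pose b := ((nu x * r + 1) %/ de x)%N.
have hb : (b * de x = nu x * r + 1)%N by rewrite /b divnK.
pose z := x + ((de x * r)%:R)^-1.
have zE : z = b%:R / r%:R.
  rewrite /z {1}(ratE x0).
  have : (b * de x)%:R = (nu x * r + 1)%:R :> rat by rewrite hb.
  rewrite !natrD !natrM => hb'.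
  have qn : (de x)%:R != 0 :> rat by rewrite pnatr_eq0 -lt0n.
  have rn : r%:R != 0 :> rat by rewrite pnatr_eq0 -lt0n.
  have -> : (b%:R : rat) = ((nu x)%:R * r%:R + 1) / (de x)%:R.
    by rewrite -hb' mulfK.
  field.
  by rewrite qn rn.
have zF : z \in farey Q.
  rewrite mem_farey; apply/andP; split; last first.
    by rewrite zE; apply: leq_trans (de_le _ r0) rQ.
  apply/andP; split.
    by rewrite /z addr_gt0 // invr_gt0 ltr0n muln_gt0 q0 r0.
  rewrite zE ler_pdivrMr ?ltr0n // mul1r ler_nat.
  have : (b * de x <= r * de x)%N by rewrite hb; nia.
  by rewrite leq_pmul2r.
apply: (@le_trans _ _ (z - x)); last by rewrite /z addrC addKr.
by rewrite lerD2r; apply: nb => //; rewrite /z ltrDl invr_gt0 ltr0n muln_gt0 q0 r0.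
Qed.

Lemma nu_inj_aux (q a a' r : nat) : (a' <= a)%N -> (a < q)%N ->
  (q %| a * r + 1)%N -> (q %| a' * r + 1)%N -> a = a'.
Proof.
move=> le aq d1 d2.
have co : coprime q r.
  rewrite /coprime -dvdn1; set g := gcdn q r.
  have g1 : (g %| a * r + 1)%N by apply: dvdn_trans d1; exact: dvdn_gcdl.
  have g2 : (g %| a * r)%N by apply: dvdn_mull; exact: dvdn_gcdr.
  by rewrite -(dvdn_addr 1 g2).
have : (q %| (a - a') * r)%N.
  have -> : ((a - a') * r = (a * r + 1) - (a' * r + 1))%N by rewrite mulnBl; lia.
  exact: dvdn_sub.
rewrite Gauss_dvdl // => d.
have : (a - a' = 0)%N.
  apply/eqP; apply: contraT => nz.
  have := dvdn_leq _ d; lia.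
lia.
Qed.

Lemma x_inj Q x x' (r : nat) : x \in farey Q -> x' \in farey Q -> x < 1 -> x' < 1 ->
  de x = de x' -> (de x %| nu x * r + 1)%N -> (de x' %| nu x' * r + 1)%N -> x = x'.
Proof.
rewrite !mem_farey => /andP[/andP[x0 _] _] /andP[/andP[x0' _] _] x1 x1' e d d'.
rewrite (ratE x0) (ratE x0') -e; congr (_%:R / _).
rewrite -e in d'.
have l := nu_lt_de x0 x1; have l' := nu_lt_de x0' x1'.
case: (leqP (nu x') (nu x)) => h.
  exact: nu_inj_aux h l d d'.
by symmetry; apply: (nu_inj_aux (ltnW h) _ d' d); rewrite e.
Qed.


Definition rof Q (x : rat) : 'I_Q.+1 :=
  odflt ord0 [pick r : 'I_Q.+1 | (Q < de x + r)%N && (de x %| nu x * r + 1)%N].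

Lemma rofP Q x : x \in farey Q -> x < 1 ->
  (Q < de x + rof Q x)%N && (de x %| nu x * rof Q x + 1)%N.
Proof.
move=> xF x1; rewrite /rof; case: pickP => [r -> //|H].
have [r Hr] := exists_r xF x1.
by move: (H r); rewrite Hr.
Qed.


Lemma S2_le Q : S2 Q <= \sum_(p : 'I_Q.+1 * 'I_Q.+1 | (1 < p.1)%N && (Q < p.1 + p.2)%N)
   (((p.1 * p.2)%N%:R) ^+ 2)^-1.
Proof.
rewrite /S2 /=.
set s := farey Q.
have so : sorted <%R s.
  rewrite lt_sorted_uniq_le sort_uniq undup_uniq /=.
  exact: (sort_sorted le_total).
have sle : sorted <=%R s by exact: (sort_sorted le_total).
have hj : forall j : 'I_(size s).-1, (j.+1 < size s)%N by move=> j; rewrite -ltn_predRL.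
have xin : forall j : 'I_(size s).-1, s`_j \in s.
  by move=> j; apply: mem_nth; exact: ltnW (hj j).
have yin : forall j : 'I_(size s).-1, s`_j.+1 \in s by move=> j; apply: mem_nth; exact: hj j.
have xy : forall j : 'I_(size s).-1, s`_j < s`_j.+1.
  move=> j; apply: (sorted_ltn_nth lt_trans) => //; rewrite ?inE ?hj ?(ltnW (hj j)) //.
have y1 : forall j : 'I_(size s).-1, s`_j.+1 <= 1.
  by move=> j; have := yin j; rewrite mem_farey => /andP[/andP[_ ->]].
have x1 : forall j : 'I_(size s).-1, s`_j < 1 by move=> j; apply: lt_le_trans (xy j) (y1 j).
have nb : forall j : 'I_(size s).-1, forall z, z \in s -> s`_j < z -> s`_j.+1 <= z.
  move=> j z zin xz.
  have kl : (index z s < size s)%N by rewrite index_mem.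
  have zE : z = s`_(index z s) by rewrite nth_index.
  move: kl zE; set k := index z s => kl zE.
  have jl := ltnW (hj j).
  case: (leqP k j) => h.
    have : z <= s`_j.
      by rewrite zE; apply: (sorted_leq_nth le_trans lexx) => //; rewrite inE.
    by rewrite leNgt xz.
  by rewrite zE; apply: (sorted_leq_nth le_trans lexx) => //; rewrite inE.
pose phi := fun j : 'I_(size s).-1 => (inord (de s`_j) : 'I_Q.+1, rof Q s`_j).
have deQ : forall j : 'I_(size s).-1, (de s`_j <= Q)%N.
  by move=> j; have := xin j; rewrite mem_farey => /andP[_].
have phi1 : forall j, ((phi j).1 : nat) = de s`_j.
  by move=> j; rewrite /phi /= inordK // ltnS deQ.
have phiP : forall j, (1 < (phi j).1)%N && (Q < (phi j).1 + (phi j).2)%N.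
  move=> j; rewrite phi1.
  have /andP[h1 h2] := rofP (xin j) (x1 j).
  rewrite h1 andbT.
  have := xin j; rewrite mem_farey => /andP[/andP[x0 _] _].
  have := nu_lt_de x0 (x1 j); have := nu_gt0 x0; lia.
have phi_inj : injective phi.
  move=> j j' e.
  have e1 : de s`_j = de s`_j' by rewrite -!phi1 e.
  have e2 : rof Q s`_j = rof Q s`_j' by move: e => [_ ->].
  have /andP[_ d] := rofP (xin j) (x1 j).
  have /andP[_ d'] := rofP (xin j') (x1 j').
  rewrite e2 in d.
  have := x_inj (xin j) (xin j') (x1 j) (x1 j') e1 d d'.
  move/eqP; rewrite nth_uniq ?(ltnW (hj j)) ?(ltnW (hj j')) ?sort_uniq ?undup_uniq //.
  by move/eqP => /val_inj.
apply: (@le_trans _ _ (\sum_(j < (size s).-1) (((phi j).1 * (phi j).2)%N%:R ^+ 2)^-1)).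
  apply: ler_sum => j _.
  have /andP[h1 h2] := rofP (xin j) (x1 j).
  have g := gap_le (xin j) (yin j) (xy j) (nb j) (ltnSE (ltn_ord _)) h1 h2.
  rewrite phi1 -exprVn; change (phi j).2 with (rof Q s`_j).
  have g0 : 0 <= s`_j.+1 - s`_j by rewrite subr_ge0 ltW // xy.
  by rewrite !expr2; apply: ler_pM.
rewrite (_ : \sum_(j < (size s).-1) _ = \sum_(p in [set phi j | j in predT])
   ((((p : 'I_Q.+1 * 'I_Q.+1).1 * p.2)%N%:R ^+ 2)^-1 : rat)); last first.
  by rewrite (big_imset _ (in2W phi_inj)).
rewrite [X in _ <= X]big_mkcond [X in X <= _]big_mkcond /=.
apply: ler_sum => p _.
case: ifP => [/imsetP [j _ ->]|_]; first by rewrite phiP.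
by case: ifP => // _; rewrite invr_ge0 exprn_ge0.
Qed.
Unset Implicit Arguments. Set Strict Implicit.

Lemma ln_ge1 (R : realType) (t : R) : 0 < t -> 1 - t^-1 <= ln t.
Proof.
move=> t0.
have := @le_ln1Dx R (t^-1 - 1).
have -> : 1 + (t^-1 - 1) = t^-1 by ring.
rewrite lnV ?posrE // => H.
have : -1 < t^-1 - 1 by rewrite ltrBrDr addrC subrr invr_gt0.
move/H; lra.
Qed.

Lemma lnL (R : realType) (y : R) : 1 <= y -> 2 * (y - 1) <= (y + 1) * ln y.
Proof.
rewrite le_eqVlt => /orP[/eqP<-|y1]; first by rewrite ln1 mulr0 subrr mulr0.
pose g := fun t : R => (t + 1) * ln t - 2 * (t - 1).
pose dg := fun t : R => ln t + (t + 1) / t - 2.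
have dgx : forall t : R, 0 < t -> is_derive t 1 g (dg t).
  move=> t; move: t; rewrite /=; move=> t t0.
  have Hp : is_derive t (1:R) (fun t : R => t + 1) 1.
    have := is_deriveD (is_derive_id t (1:R)) (is_derive_cst (1:R) t 1).
    by rewrite addr0.
  have H1 := @is_deriveM R R (fun t => t + 1) (@ln R) t 1 1 t^-1 Hp (is_derive1_ln t0).
  have H2 := is_deriveZ 2 (is_deriveB (is_derive_id t (1:R)) (is_derive_cst (1:R) t 1)).
  have H3 := is_deriveB H1 H2.
  move: H3; set D := (X in is_derive _ _ _ X) => H3.
  have -> : dg t = D.
    rewrite /D /dg /= /GRing.scale /= mulr1; field; lra.
  exact: H3.
have cg : forall t : R, t \in `[1, y] -> derivable g t 1.
  move=> t; rewrite in_itv /= => /andP[t1 _].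
  have t0 : 0 < t by lra.
  by have /@ex_derive := dgx t t0.
have dgi : forall t : R, t \in `]1, y[ -> is_derive t 1 g (dg t).
  move=> t; rewrite in_itv /= => /andP[t1 _]; apply: dgx; lra.
have [c cI E] := MVT y1 dgi (derivable_within_continuous cg).
move: cI; rewrite in_itv /= => /andP[c1 cy].
have c0 : 0 < c by lra.
have Hl := @ln_ge1 R c c0.
have dgc : 0 <= dg c.
  rewrite /dg; have -> : (c + 1) / c = 1 + c^-1 by field; lra.
  lra.
have g1 : g 1 = 0 by rewrite /g ln1; ring.
have : 0 <= g y - g 1 by rewrite E; apply: mulr_ge0 => //; lra.
rewrite g1 /g /=; lra.
Qed.

Lemma lnD2 (R : realType) (a b : R) : 0 < a -> a <= b -> 2 * (b - a) / (b + a) <= ln b - ln a.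
Proof.
move=> a0 ab.
have b0 : 0 < b by lra.
have y1 : 1 <= b / a by rewrite ler_pdivlMr // mul1r.
have := @lnL R _ y1; rewrite ln_div ?posrE //.
move=> H.
rewrite ler_pdivrMr; last by lra.
have E1 : 2 * (b / a - 1) = 2 * (b - a) / a by field; lra.
have E2 : (b / a + 1) = (b + a) / a by field; lra.
rewrite E1 E2 in H.
rewrite ler_pdivrMr // in H.
move: H; set L := ln b - ln a.
have -> : (b + a) / a * L * a = L * (b + a) by field; lra.
done.
Qed.

Lemma sumA (R : realType) (Q : nat) : (1 <= Q)%N ->
  \sum_(2 <= q < Q.+1) (q%:R : R)^-1 <= ln (2 * Q%:R + 1) - ln 3.
Proof.
move=> Q1.
pose u := fun q : nat => ln (2 * (q%:R : R) - 1).
have -> : ln (2 * Q%:R + 1) - ln 3 = u Q.+1 - u 2%N.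
  by rewrite /u -natr1; congr (ln _ - ln _); ring.
rewrite -telescope_sumr; last by lia.
apply: ler_sum_nat => q /andP[q2 _].
rewrite /u.
have q0 : (2 : R) <= q%:R by rewrite ler_nat.
have e : ((q.+1)%:R : R) = q%:R + 1 by rewrite natr1.
rewrite e.
have := @lnD2 R (2 * q%:R - 1) (2 * (q%:R + 1) - 1) => H.
have E : (q%:R : R)^-1 = 2 * (2 * (q%:R + 1) - 1 - (2 * q%:R - 1)) / (2 * (q%:R + 1) - 1 + (2 * q%:R - 1)).
  field; lra.
rewrite E; apply: H; lra.
Qed.

Lemma sumB (R : realType) (Q : nat) : (2 <= Q)%N ->
  \sum_(2 <= q < Q.+1) 2 / (2 * (Q%:R - q%:R) + 1) <= 2 + ln ((Q%:R : R) - 1).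
Proof.
move=> Q2.
rewrite big_nat_recr /=; last by lia.
have -> : 2 / (2 * ((Q%:R : R) - Q%:R) + 1) = 2 by rewrite subrr mulr0 add0r divr1.
rewrite addrC lerD2l.
pose u := fun q : nat => - ln ((Q%:R : R) - q%:R + 1).
have -> : ln ((Q%:R : R) - 1) = u Q - u 2%N.
  rewrite /u subrr add0r ln1 oppr0 sub0r opprK; congr ln; rewrite -natr1; ring.
rewrite -telescope_sumr; last by lia.
apply: ler_sum_nat => q /andP[q2 qQ].
rewrite /u.
have qQ' : (q%:R : R) + 1 <= Q%:R by rewrite natr1 ler_nat.
have e : ((q.+1)%:R : R) = q%:R + 1 by rewrite natr1.
rewrite e.
have := @lnD2 R ((Q%:R : R) - q%:R) ((Q%:R : R) - q%:R + 1) => H.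
have -> : - ln ((Q%:R : R) - (q%:R + 1) + 1) - - ln ((Q%:R : R) - q%:R + 1)
   = ln ((Q%:R : R) - q%:R + 1) - ln ((Q%:R : R) - q%:R).
  have -> : (Q%:R : R) - (q%:R + 1) + 1 = Q%:R - q%:R by ring.
  ring.
have E : 2 / (2 * ((Q%:R : R) - q%:R) + 1) = 2 * ((Q%:R : R) - q%:R + 1 - (Q%:R - q%:R)) / ((Q%:R : R) - q%:R + 1 + (Q%:R - q%:R)).
  field; lra.
rewrite E; apply: H; lra.
Qed.

Lemma inner (R : realType) (n m : nat) : (1 <= m <= n.+1)%N ->
  \sum_(r < n.+1 | (m <= r)%N) (((r%:R : R) ^+ 2)^-1)
    <= 2 / (2 * m%:R - 1) - 2 / (2 * n%:R + 1).
Proof.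
elim: n m => [|n IH] m hm.
  have -> : m = 1%N by lia.
  rewrite big_mkcond big_ord1 /=.
  have -> : (2:R) * 1 - 1 = 1 by lra.
  have -> : (2:R) * 0 + 1 = 1 by lra.
  by rewrite divr1 subrr.
rewrite big_mkcond big_ord_recr /= -big_mkcond /=.
have e : ((n.+1)%:R : R) = n%:R + 1 by rewrite natr1.
have n0 : (0 : R) <= n%:R by [].
case: (leqP m n.+1) => h.
  have := IH m; rewrite h andbT => /(_ (proj1 (andP hm))) H.
  rewrite (_ : \sum_(i < n.+1 | (m <= widen_ord (leqnSn n.+1) i)%N) _ =
               \sum_(r < n.+1 | (m <= r)%N) (((r%:R : R) ^+ 2)^-1)) //.
  rewrite e.
  have : ((n%:R + 1) ^+ 2)^-1 <= 2 / (2 * n%:R + 1) - 2 / (2 * (n%:R + 1) + 1) :> R.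
    rewrite -subr_ge0.
    have -> : 2 / (2 * n%:R + 1) - 2 / (2 * (n%:R + 1) + 1) - ((n%:R + 1) ^+ 2)^-1
       = 1 / ((2 * n%:R + 1) * (2 * n%:R + 3) * (n%:R + 1) ^+ 2) :> R.
      field; lra.
    by apply: divr_ge0 => //.
  lra.
have -> : m = n.+2 by lia.
rewrite addr0 big1; last by move=> i; have := ltn_ord i; lia.
have e2 : ((n.+2)%:R : R) = n%:R + 1 + 1 by rewrite !natr1.
rewrite e2 e.
have -> : 2 * (n%:R + 1 + 1) - 1 = 2 * (n%:R + 1) + 1 :> R by ring.
by rewrite subrr.
Qed.

Lemma T_bound (R : realType) Q : (2 <= Q)%N ->
  \sum_(p : 'I_Q.+1 * 'I_Q.+1 | (1 < p.1)%N && (Q < p.1 + p.2)%N)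
     ((((p.1 * p.2)%N)%:R ^+ 2)^-1 : R)
  <= 4 / (2 * Q%:R + 1) ^+ 2 * ((ln (2 * Q%:R + 1) - ln 3) + (2 + ln (Q%:R - 1))).
Proof.
move=> Q2.
rewrite -(pair_big_dep (fun q : 'I_Q.+1 => (1 < q)%N) (fun q r : 'I_Q.+1 => (Q < q + r)%N)
   (fun q r : 'I_Q.+1 => ((((q * r)%N)%:R ^+ 2)^-1 : R))) /=.
have QR : (2 : R) <= Q%:R by rewrite ler_nat.
apply: (@le_trans _ _ (\sum_(q < Q.+1 | (1 < q)%N)
   (4 / (2 * Q%:R + 1) ^+ 2 * ((q%:R : R)^-1 + 2 / (2 * (Q%:R - q%:R) + 1))))).
  apply: ler_sum => q q1.
  have qQ : (q <= Q)%N by have := ltn_ord q; lia.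
  have qR : (q%:R : R) <= Q%:R by rewrite ler_nat.
  have q2 : (2 : R) <= q%:R by rewrite ler_nat.
  rewrite (eq_bigr (fun r : 'I_Q.+1 => (q%:R ^+ 2)^-1 * ((r%:R : R) ^+ 2)^-1)); last first.
    by move=> r _; rewrite natrM exprMn invfM.
  rewrite -mulr_sumr.
  rewrite (eq_bigl (fun r : 'I_Q.+1 => ((Q - q).+1 <= r)%N)); last by move=> r; lia.
  have H := @inner R Q (Q - q).+1.
  have : (1 <= (Q - q).+1 <= Q.+1)%N by lia.
  move/H => {}H.
  apply: (@le_trans _ _ ((q%:R ^+ 2)^-1 * (2 / (2 * ((Q - q).+1)%:R - 1) - 2 / (2 * Q%:R + 1)))).
    apply: ler_wpM2l => //; by rewrite invr_ge0 exprn_ge0.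
  have e : (((Q - q).+1)%:R : R) = Q%:R - q%:R + 1 by rewrite -natr1 natrB.
  rewrite e.
  rewrite le_eqVlt; apply/orP; left; apply/eqP; field.
  repeat (apply/andP; split); apply/eqP; lra.
rewrite -mulr_sumr; apply: ler_wpM2l.
  by apply: divr_ge0 => //; apply: exprn_ge0; lra.
rewrite big_split /=.
apply: lerD.
  rewrite (eq_bigl (fun q : 'I_Q.+1 => true && (2 <= q)%N)) //.
  rewrite -(big_geq_mkord 2 Q.+1 xpredT (fun q => (q%:R : R)^-1)).
  apply: sumA; lia.
rewrite (eq_bigl (fun q : 'I_Q.+1 => true && (2 <= q)%N)) //.
rewrite -(big_geq_mkord 2 Q.+1 xpredT (fun q => 2 / (2 * ((Q%:R : R) - q%:R) + 1))).
exact: sumB.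
Qed.

Lemma final_arith (R : realFieldType) (q L X s : R) : 2 <= q -> 2 * (q - 1) <= L * (q + 1) ->
  X <= 2 * L + 8 / 5 -> s <= 4 / (2 * q + 1) ^+ 2 * X -> s * q ^+ 2 < 3 * L.
Proof.
move=> q2 hL hX hs.
have D0 : 0 < (2 * q + 1) ^+ 2 by apply: exprn_gt0; lra.
have q20 : 0 < q ^+ 2 by apply: exprn_gt0; lra.
have L0 : 0 < L.
  have : 0 < L * (q + 1) by lra.
  by rewrite pmulr_lgt0 //; lra.
apply: (@le_lt_trans _ _ (4 / (2 * q + 1) ^+ 2 * X * q ^+ 2)).
  by apply: ler_wpM2r => //; apply: ltW.
have -> : 4 / (2 * q + 1) ^+ 2 * X * q ^+ 2 = (4 * q ^+ 2 * X) / (2 * q + 1) ^+ 2.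
  by field; apply/eqP; lra.
rewrite ltr_pdivrMr //.
apply: (@le_lt_trans _ _ (4 * q ^+ 2 * (2 * L + 8 / 5))).
  by apply: ler_wpM2l => //; apply: mulr_ge0 => //; apply: ltW.
set P := 4 * q ^+ 2 + 12 * q + 3.
have P0 : 0 < P by rewrite /P; have := ltW q20; lra.
have key : 32 / 5 * q ^+ 2 < L * P.
  have h1 : 2 * (q - 1) * P <= L * (q + 1) * P by apply: ler_wpM2r => //; apply: ltW.
  have h2 : 32 / 5 * q ^+ 2 * (q + 1) < 2 * (q - 1) * P.
    rewrite /P !expr2.
    have : 0 < 8 * q * q * q + 48 * q * q - 90 * q - 30 by nra.
    lra.
  have : 32 / 5 * q ^+ 2 * (q + 1) < L * P * (q + 1) by lra.
  by rewrite ltr_pM2r //; lra.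
have -> : 4 * q ^+ 2 * (2 * L + 8 / 5) = 8 * L * q ^+ 2 + 32 / 5 * q ^+ 2 by ring.
have -> : 3 * L * (2 * q + 1) ^+ 2 = 8 * L * q ^+ 2 + L * P by rewrite /P; ring.
lra.
Qed.

Theorem theorem1 (R : realType) (Q : nat) : (1 < Q)%N -> C (R:=R) Q < 3.
Proof.
move=> Q2.
have QR : (2 : R) <= Q%:R by rewrite ler_nat.
have L0 : 0 < ln (Q%:R : R) by apply: ln_gt0; lra.
rewrite /C ltr_pdivrMr //.
have H1 : ratr (S2 Q) <= \sum_(p : 'I_Q.+1 * 'I_Q.+1 | (1 < p.1)%N && (Q < p.1 + p.2)%N)
     ((((p.1 * p.2)%N)%:R ^+ 2)^-1 : R).
  have := S2_le Q; rewrite -(ler_rat R) => H.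
  apply: (le_trans H); rewrite le_eqVlt; apply/orP; left; apply/eqP.
  rewrite rmorph_sum; apply: eq_bigr => p _; by rewrite fmorphV rmorphXn rmorph_nat.
have H2 := @T_bound R Q Q2.
set L := ln (Q%:R : R).
have hL' : 2 * (Q%:R - 1) <= L * (Q%:R + 1).
  have := @lnD2 R 1 Q%:R ltr01 (le_trans (ler1n R 2) QR).
  rewrite ln1 subr0 ler_pdivrMr; last by lra.
  by rewrite mulrC.
have h32 : 2 / 5 <= ln (3 : R) - ln 2.
  have := @lnD2 R 2 3 (ltr0n R 2) (ler_nat R 2 3).
  have -> : (3:R) - 2 = 1 by lra.
  have -> : (2:R) * 1 / (3 + 2) = 2 / 5 by rewrite mulr1; congr (_ / _); lra.
  done.
have hprod : ln (2 * Q%:R + 1 : R) + ln (Q%:R - 1) <= ln 2 + 2 * L.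
  have -> : 2 * L = ln (Q%:R ^+ 2 : R) by rewrite lnXn; [rewrite /L mulr2n; ring | lra].
  have A1 : (0:R) < 2 * Q%:R + 1 by lra.
  have A2 : (0:R) < Q%:R - 1 by lra.
  have A3 : (0:R) < 2 by lra.
  have A4 : (0:R) < Q%:R ^+ 2 by apply: exprn_gt0; lra.
  rewrite -!lnM ?posrE //.
  rewrite ler_ln ?posrE; try (by apply: mulr_gt0).
  by rewrite expr2; nra.
apply: (@final_arith R Q%:R L ((ln (2 * Q%:R + 1) - ln 3) + (2 + ln (Q%:R - 1))) (ratr (S2 Q))) => //.
- lra.
- by apply: le_trans H1 H2.
Qed.
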